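(* Let $\mathcal{X}'\subseteq\mathcal{X}$ be a set of pairwise backward kinematically inseparable observations and let $\mathcal{X}'_1,\mathcal{X}'_2\subset\mathcal{X}'$. For any policies $\pi_1,\pi_2\in\Upsilon$, $$\frac{\mathbb{P}_{\pi_1}(\mathcal{X}'_1)}{\mathbb{P}_{\pi_2}(\mathcal{X}'_1)}=\frac{\mathbb{P}_{\pi_1}(\mathcal{X}'_2)}{\mathbb{P}_{\pi_2}(\mathcal{X}'_2)}.$$
   Context: Block MDP: horizon $H$; finite latent states $\mathcal{S}=\sqcup_h\mathcal{S}_h$; countable observations $\mathcal{X}=\sqcup_h\mathcal{X}_h$; finite actions $\mathcal{A}$; start distribution $\mu\in\Delta(\mathcal{S}_1)$; transitions $T(\cdot\mid s,a)\in\Delta(\mathcal{S}_{h+1})$ for $s\in\mathcal{S}_h$; emissions $q(\cdot\mid s)\in\Delta(\mathcal{X}_h)$ with pairwise disjoint supports, decoder $g^\star$. Episodes: $s_1\sim\mu$, $x_h\sim q(\cdot\mid s_h)$, agent chooses $a_h$, $s_{h+1}\sim T(\cdot\mid s_h,a_h)$. $\Upsilon$ is the set of all policies $\mathcal{X}\to\Delta(\mathcal{A})$ (by layering these include all non-stationary policies); $\mathbb{P}_\pi(\mathcal{Y})$ is the probability that the trajectory under $\pi$ visits an observation in $\mathcal{Y}$. Observation transitions $T(x'\mid x,a)=q(x'\mid g^\star(x'))T(g^\star(x')\mid g^\star(x),a)$; for full-support $u\in\Delta(\mathcal{X}\times\mathcal{A})$, $\mathbb{P}_u(x,a\mid x')=\frac{T(x'\mid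 x,a)u(x,a)}{\sum_{\tilde x,\tilde a}T(x'\mid\tilde x,\tilde a)u(\tilde x,\tilde a)}$; $x_1',x_2'$ are backward kinematically inseparable if $\mathbb{P}_u(\cdot\mid x_1')=\mathbb{P}_u(\cdot\mid x_2')$ for every full-support $u$. *)

(* Defs.v *)
From HB Require Import structures.
From mathcomp Require Import all_boot all_order all_algebra.
From mathcomp Require Import all_classical all_reals.
From mathcomp Require Import ereal esum.
Set Implicit Arguments. Unset Strict Implicit. Unset Printing Implicit Defensive.
Import Order.TTheory GRing.Theory Num.Theory.
Local Open Scope classical_set_scope.
Local Open Scope ring_scope.

(* Conventions:
   - latent states S : finType, observations X : countType, actions A : finType;
   - layers are indexed 0 .. H-1 (layer h of the paper is ordinal h-1);
   - mu s = mu(s), T s a s' = T(s' | s, a), q s x = q(x | s), pi x a = pi(a | x);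
   - g is the decoder g^*. *)

Section BlockMDP.
Variables (R : realType) (H : nat) (S : finType) (X : countType) (A : finType).
Variables (layS : S -> 'I_H) (layX : X -> 'I_H).
Variables (mu : S -> R) (T : S -> A -> S -> R) (q : S -> X -> R) (g : X -> S).

(* Block MDP axioms. Transitions out of the last layer are zero: the episode
   ends after layer H (there is no layer H+1). *)
Definition is_block_mdp : Prop :=
  [/\ [/\ (forall s, 0 <= mu s), \sum_(s : S) mu s = 1 &
           (forall s, 0 < mu s -> val (layS s) = 0%N)],
      [/\ (forall s a s', 0 <= T s a s'),
           (forall s a, ((val (layS s)).+1 < H)%N -> \sum_(s' : S) T s a s' = 1) &
           (forall s a s', 0 < T s a s' -> val (layS s') = (val (layS s)).+1)],
      [/\ (forall s x, 0 <= q s x),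
           (forall s, (\esum_(x in [set: X]) (q s x)%:E = 1)%E) &
           (forall s x, 0 < q s x -> val (layX x) = val (layS s))] &
      (* pairwise disjoint emission supports, decoded by g *)
      (forall s x, 0 < q s x -> g x = s)].

Definition is_policy (pi : X -> A -> R) : Prop :=
  (forall x a, 0 <= pi x a) /\ (forall x, \sum_(a : A) pi x a = 1).

Fixpoint traj_weight_from (pi : X -> A -> R) (s : S) (a : A)
    (tr : seq (S * X * A)) : R :=
  if tr is (s', x', a') :: tr' then
    T s a s' * q s' x' * pi x' a' * traj_weight_from pi s' a' tr'
  else 1.

Definition traj_weight (pi : X -> A -> R) (tr : seq (S * X * A)) : R :=
  if tr is (s, x, a) :: tr' then
    mu s * q s x * pi x a * traj_weight_from pi s a tr'
  else 1.

Definition prob_visit (pi : X -> A -> R) (Y : set X) : R :=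
  fine (\esum_(tr in [set tr : H.-tuple (S * X * A) |
                       exists2 p, p \in tval tr & Y p.1.2])
          (traj_weight pi (tval tr))%:E)%E.

Definition obsT (x' x : X) (a : A) : R := q (g x') x' * T (g x) a (g x').

Definition full_support (u : X * A -> R) : Prop :=
  (forall xa, 0 < u xa) /\ (\esum_(xa in [set: X * A]) (u xa)%:E = 1)%E.

Definition condP (u : X * A -> R) (x' : X) : X * A -> R :=
  fun xa => obsT x' xa.1 xa.2 * u xa /
    fine (\esum_(y in [set: X * A]) (obsT x' y.1 y.2 * u y)%:E)%E.

Definition backward_kin_insep (x1 x2 : X) : Prop :=
  forall u, full_support u -> condP u x1 = condP u x2.

End BlockMDP.

(* Main.v *)
From HB Require Import structures.
From mathcomp Require Import all_boot all_order all_algebra.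
From mathcomp Require Import all_classical all_reals.
From mathcomp Require Import ereal esum sequences.
From mathcomp Require Import ring lra zify.
Require Import Defs.
Import Order.TTheory GRing.Theory Num.Theory.
Local Open Scope classical_set_scope.
Local Open Scope ring_scope.


Section GenEsum.
Variable R : realType.
Local Open Scope ereal_scope.

Lemma esumZl (T : choiceType) (D : set T) (r : R) (a : T -> \bar R) :
  (0 <= r)%R -> (forall x, 0 <= a x) ->
  \esum_(i in D) (r%:E * a i) = r%:E * \esum_(i in D) a i.
Proof.
move=> r0 a0; rewrite /esum -ereal_supZl//; last first.
  by apply/set0P; exists 0; exists set0; [exact: fsets_set0|rewrite fsbig_set0].
congr ereal_sup; apply/seteqP; split=> y /=.
  move=> [F FD <-]; exists (\sum_(x \in F) a x); first by exists F.
  case: FD => finF _; rewrite !fsbig_finite//= ge0_sume_distrr//.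
move=> [z [F FD <-] <-]; exists F => //.
case: FD => finF _; rewrite !fsbig_finite//= ge0_sume_distrr//.
Qed.

Lemma esum_finT (T : finType) (a : T -> \bar R) :
  (forall x, 0 <= a x) -> \esum_(i in [set: T]) a i = \sum_(i : T) a i.
Proof.
move=> a0; rewrite esum_fset; [|exact: finite_finset|by move=> *; exact: a0].
rewrite fsbig_finite; last exact: finite_finset.
apply: perm_big; apply: uniq_perm => //; first exact: index_enum_uniq.
move=> x; rewrite in_fset_set ?mem_index_enum; [by rewrite in_setT|apply: finite_finset].
Qed.

Lemma esum_prod (T1 T2 : choiceType) (f : T1 * T2 -> \bar R) :
  (forall x, 0 <= f x) ->
  \esum_(p in [set: T1 * T2]) f p = \esum_(i in [set: T1]) \esum_(j in [set: T2]) f (i, j).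
Proof.
move=> f0; rewrite (@esum_esum R T1 T2 setT (fun _ => setT) (fun i j => f (i, j))) //.
congr esum; last by apply/funext => -[].
by apply/seteqP; split=> -[].
Qed.

Lemma esum_tuple (T : choiceType) n (f : n.+1.-tuple T -> \bar R) :
  (forall x, 0 <= f x) ->
  \esum_(t in [set: n.+1.-tuple T]) f t =
  \esum_(e in [set: T]) \esum_(t in [set: n.-tuple T]) f [tuple of e :: t].
Proof.
move=> f0; rewrite -(@esum_prod T (n.-tuple T) (fun p => f [tuple of p.1 :: p.2]))//.
rewrite (reindex_esum [set: T * n.-tuple T] [set: n.+1.-tuple T] (fun p => [tuple of p.1 :: p.2]))//.
split.
- by move=> p.
- move=> [e1 t1] [e2 t2] _ _ /= /(congr1 val) /= [-> /val_inj ->] //.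
- move=> t _; exists (thead t, behead_tuple t) => //=.
  by rewrite [RHS]tuple_eta.
Qed.

End GenEsum.

Section MDP.
Variables (R : realType) (H : nat) (S : finType) (X : countType) (A : finType).
Variables (layS : S -> 'I_H) (layX : X -> 'I_H).
Variables (mu : S -> R) (T : S -> A -> S -> R) (q : S -> X -> R) (g : X -> S).
Hypothesis hMDP : is_block_mdp layS layX mu T q g.

Lemma mu_ge0 s : 0 <= mu s. Proof. by case: hMDP => -[h _ _] _ _ _; exact: h. Qed.
Lemma mu_lay s : 0 < mu s -> val (layS s) = 0%N. Proof. by case: hMDP => -[_ _ h] _ _ _; exact: h. Qed.
Lemma T_ge0 s a s' : 0 <= T s a s'. Proof. by case: hMDP => _ [h _ _] _ _; exact: h. Qed.
Lemma T_sum s a : ((val (layS s)).+1 < H)%N -> \sum_(s' : S) T s a s' = 1.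
Proof. by case: hMDP => _ [_ h _] _ _; exact: h. Qed.
Lemma T_lay s a s' : 0 < T s a s' -> val (layS s') = (val (layS s)).+1.
Proof. by case: hMDP => _ [_ _ h] _ _; exact: h. Qed.
Lemma q_ge0 s x : 0 <= q s x. Proof. by case: hMDP => _ _ [h _ _] _; exact: h. Qed.
Lemma q_sum s : (\esum_(x in [set: X]) (q s x)%:E = 1)%E.
Proof. by case: hMDP => _ _ [_ h _] _; exact: h. Qed.
Lemma q_dec s x : 0 < q s x -> g x = s. Proof. by case: hMDP => _ _ _ h; exact: h. Qed.

Lemma T_pos s a s' : T s a s' != 0 -> 0 < T s a s'.
Proof. by move=> h; rewrite lt0r h T_ge0. Qed.
Lemma q_pos s x : q s x != 0 -> 0 < q s x.
Proof. by move=> h; rewrite lt0r h q_ge0. Qed.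
Arguments T_pos {s a s'}. Arguments q_pos {s x}. Arguments T_lay {s a s'}.
Arguments q_dec {s x}. Arguments mu_lay {s}.

Lemma T_le1 s a s' : T s a s' <= 1.
Proof.
case: (ltnP (val (layS s)).+1 H) => hl.
  rewrite -(T_sum s a hl) (bigD1 s') //= lerDl sumr_ge0 // => i _; exact: T_ge0.
case: (eqVneq (T s a s') 0) => [->|/T_pos/T_lay hT]; first exact: ler01.
by move: (ltn_ord (layS s')); rewrite hT; lia.
Qed.

Lemma le_esum1 (U : choiceType) (D : set U) (f : U -> \bar R) x :
  D x -> (forall y, 0 <= f y)%E -> (f x <= \esum_(i in D) f i)%E.
Proof.
move=> Dx f0; apply: esum_ge; exists [set x].
  by split; [exact: finite_set1|move=> y ->].
by rewrite fsbig_set1.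
Qed.

Lemma q_le1 s x : q s x <= 1.
Proof.
rewrite -lee_fin -(q_sum s); apply: le_esum1 => // y; rewrite lee_fin; exact: q_ge0.
Qed.

Lemma emits s : exists x, 0 < q s x.
Proof.
apply: contrapT => hn.
have : (\esum_(x in [set: X]) (q s x)%:E = 0)%E.
  apply: esum1 => x _; congr EFin; apply/eqP; apply: contrapT => /negP hx.
  by apply: hn; exists x; exact: q_pos.
by rewrite q_sum => /eqP; rewrite eqe oner_eq0.
Qed.


Definition w1 (pi : X -> A -> R) s a (e : S * X * A) : R :=
  T s a e.1.1 * q e.1.1 e.1.2 * pi e.1.2 e.2.

Lemma twE pi s a e tr :
  traj_weight_from T q pi s a (e :: tr) = w1 pi s a e * traj_weight_from T q pi e.1.1 e.2 tr.
Proof. by case: e => -[]. Qed.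

Section Pol.
Variable pi : X -> A -> R.
Hypothesis hpi : is_policy pi.

Lemma pi_ge0 x a : 0 <= pi x a. Proof. by case: hpi. Qed.
Lemma pi_sum x : \sum_(a : A) pi x a = 1. Proof. by case: hpi. Qed.

Lemma w1_ge0 s a e : 0 <= w1 pi s a e.
Proof. by rewrite /w1 !mulr_ge0 ?T_ge0 ?q_ge0 ?pi_ge0. Qed.

Lemma w1_pos s a e : w1 pi s a e != 0 ->
  [/\ 0 < T s a e.1.1, 0 < q e.1.1 e.1.2, g e.1.2 = e.1.1 &
      val (layS e.1.1) = (val (layS s)).+1].
Proof.
rewrite /w1 !mulf_eq0 !negb_or => /andP[/andP[hT hq] _].
have hT' := T_pos hT; have hq' := q_pos hq.
by split => //; [exact: q_dec|exact: T_lay hT'].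
Qed.

Arguments w1_pos : clear implicits.
Lemma tw_ge0 s a tr : 0 <= traj_weight_from T q pi s a tr.
Proof.
elim: tr s a => [|e tr IH] s a; first exact: ler01.
by rewrite twE mulr_ge0 ?w1_ge0.
Qed.

End Pol.

Definition Mass pi n s a : \bar R :=
  \esum_(t in [set: n.-tuple (S * X * A)]) (traj_weight_from T q pi s a t)%:E.

Definition vis (Y : set X) : set (seq (S * X * A)) :=
  [set tr : seq (S * X * A) | exists2 p : S * X * A, p \in tr & Y p.1.2].

Definition Vis pi n s a (Y : set X) : \bar R :=
  \esum_(t in [set: n.-tuple (S * X * A)])
     (if tval t \in vis Y then traj_weight_from T q pi s a t else 0)%:E.

Lemma vis_cons Y e tr : (e :: tr \in vis Y) = (e.1.2 \in Y) || (tr \in vis Y).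
Proof.
apply/idP/orP.
  move=> /set_mem [p]; rewrite in_cons => /orP[/eqP -> hy|hp hy]; first by left; exact: (mem_set hy).
  by right; apply: mem_set; exists p.
case=> /set_mem h; apply: mem_set; first by exists e => //; rewrite in_cons eqxx.
by case: h => p hp hy; exists p => //; rewrite in_cons hp orbT.
Qed.

Lemma Mass0 pi s a : Mass pi 0 s a = 1%E.
Proof.
rewrite /Mass (_ : [set: 0.-tuple _] = [set [tuple]]); last first.
  by apply/seteqP; split => t // _; rewrite (tuple0 t).
by rewrite esum_set1 // lee_fin ler01.
Qed.

Lemma Vis0 pi s a Y : Vis pi 0 s a Y = 0%E.
Proof.
apply: esum1 => t _; rewrite (tuple0 t) /=.
suff -> : ([::] \in vis Y) = false by [].
by apply/negbTE/negP => /set_mem [].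
Qed.

Lemma MassS pi (hpi : is_policy pi) n s a :
  Mass pi n.+1 s a = (\esum_(e in [set: S * X * A]) (w1 pi s a e)%:E * Mass pi n e.1.1 e.2)%E.
Proof.
rewrite /Mass esum_tuple; last by move=> t; rewrite lee_fin tw_ge0.
apply: eq_esum => e _.
under eq_esum => t _ do rewrite (_ : tval [tuple of e :: t] = e :: tval t)// twE EFinM.
by rewrite esumZl ?w1_ge0 // => t; rewrite lee_fin tw_ge0.
Qed.

Lemma VisS pi (hpi : is_policy pi) n s a Y :
  Vis pi n.+1 s a Y = (\esum_(e in [set: S * X * A]) (w1 pi s a e)%:E *
     (if e.1.2 \in Y then Mass pi n e.1.1 e.2 else Vis pi n e.1.1 e.2 Y))%E.
Proof.
rewrite /Vis esum_tuple; last by move=> t; case: ifP; rewrite lee_fin ?tw_ge0.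
apply: eq_esum => e _.
case: ifP => hy.
  under eq_esum => t _ do rewrite (_ : tval [tuple of e :: t] = e :: tval t)// vis_cons hy ?orTb ?orFb twE EFinM.
  by rewrite esumZl ?w1_ge0 // => t; rewrite lee_fin tw_ge0.
under eq_esum => t _ do rewrite (_ : tval [tuple of e :: t] = e :: tval t)// vis_cons hy ?orTb ?orFb twE -[X in if _ then _ else X](mulr0 (w1 pi s a e)) -fun_if EFinM.
by rewrite esumZl ?w1_ge0 // => t; case: ifP; rewrite lee_fin ?tw_ge0.
Qed.


Lemma split1 (f : S * X * A -> \bar R) : (forall e, 0 <= f e)%E ->
  (\esum_(e in [set: S * X * A]) f e =
   \sum_(s : S) \esum_(x in [set: X]) \sum_(a : A) f ((s, x), a))%E.
Proof.
move=> f0; rewrite esum_prod //.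
under eq_esum do rewrite esum_finT //.
rewrite (@esum_prod R S X (fun p => \sum_(a : A) f (p, a))); last first.
  by move=> p; apply: sume_ge0 => a _.
rewrite esum_finT // => s; apply: esum_ge0 => x _; apply: sume_ge0 => a _; exact: f0.
Qed.

Lemma split2 (f : S * X * A -> \bar R) : (forall e, 0 <= f e)%E ->
  (\esum_(e in [set: S * X * A]) f e =
   \esum_(x in [set: X]) \sum_(s : S) \sum_(a : A) f ((s, x), a))%E.
Proof.
move=> f0; rewrite split1 // esum_sum // => x s _ _.
by apply: sume_ge0 => a _.
Qed.

Lemma Mass_ge0 pi (hpi : is_policy pi) n s a : (0 <= Mass pi n s a)%E.
Proof. by apply: esum_ge0 => t _; rewrite lee_fin tw_ge0. Qed.

Lemma Vis_ge0 pi (hpi : is_policy pi) n s a Y : (0 <= Vis pi n s a Y)%E.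
Proof. by apply: esum_ge0 => t _; case: ifP; rewrite lee_fin ?tw_ge0. Qed.

Lemma Mass1 pi (hpi : is_policy pi) n s a :
  (val (layS s) + n < H)%N -> Mass pi n s a = 1%E.
Proof.
elim: n s a => [|n IH] s a hl; first exact: Mass0.
rewrite MassS //.
transitivity (\esum_(e in [set: S * X * A]) (w1 pi s a e)%:E)%E.
  apply: eq_esum => e _.
  case: (eqVneq (w1 pi s a e) 0) => [->|/w1_pos [_ _ _ hle]]; first by rewrite !mul0e.
  by rewrite IH ?mule1 // hle; lia.
rewrite split1; last by move=> e; rewrite lee_fin w1_ge0.
transitivity (\sum_(s' : S) (T s a s')%:E)%E; last first.
  by rewrite sumEFin T_sum //; lia.
apply: eq_bigr => s' _.
under eq_esum => x _.
  rewrite sumEFin.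
  under eq_bigr do rewrite /w1 /=.
  rewrite -mulr_sumr pi_sum // mulr1 EFinM.
  over.
by rewrite esumZl ?T_ge0 ?q_sum ?mule1 // => x; rewrite lee_fin q_ge0.
Qed.


Lemma esumZe (U : choiceType) (D : set U) (r : \bar R) (f : U -> \bar R) :
  (0 <= r)%E -> (forall x, 0 <= f x)%E ->
  (\esum_(i in D) (r * f i) = r * \esum_(i in D) f i)%E.
Proof.
case: r => [r| |] // r0 f0; first by rewrite esumZl.
case: (eqVneq (\esum_(i in D) f i) 0%E) => h.
  rewrite h mule0; apply: esum1 => x Dx.
  have : (f x <= 0)%E by rewrite -h; exact: le_esum1.
  by move=> hx; rewrite (_ : f x = 0%E) ?mule0 //; apply/eqP; rewrite eq_le hx f0.
have hpos : (0 < \esum_(i in D) f i)%E by rewrite lt0e h esum_ge0.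
rewrite gt0_mulye //.
have [x Dx fx] : exists2 x, D x & f x != 0%E.
  apply: contrapT => hn; move/eqP: h; apply.
  apply: esum1 => x Dx; apply: contrapT => hx; apply: hn; exists x => //; exact/eqP.
have : (+oo * f x <= \esum_(i in D) (+oo * f i))%E.
  by apply: le_esum1 => // y; rewrite mule_ge0.
rewrite gt0_mulye ?lt0e ?fx ?f0 // => hle; by apply/eqP; rewrite eq_le leey hle.
Qed.

Definition w0 (pi : X -> A -> R) (e : S * X * A) : R := mu e.1.1 * q e.1.1 e.1.2 * pi e.1.2 e.2.

Lemma w0_ge0 pi (hpi : is_policy pi) e : 0 <= w0 pi e.
Proof. by rewrite /w0 !mulr_ge0 ?mu_ge0 ?q_ge0 ?pi_ge0. Qed.

Lemma w0_pos pi e : w0 pi e != 0 ->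
  [/\ 0 < mu e.1.1, 0 < q e.1.1 e.1.2, g e.1.2 = e.1.1 & val (layS e.1.1) = 0%N].
Proof.
rewrite /w0 !mulf_eq0 !negb_or => /andP[/andP[hm hq] _].
have hm' : 0 < mu e.1.1 by rewrite lt0r hm mu_ge0.
have hq' := q_pos hq.
by split => //; [exact: q_dec|exact: mu_lay].
Qed.

Lemma prob_dec pi (hpi : is_policy pi) n Y :
  prob_visit n.+1 mu T q pi Y = fine (\esum_(e in [set: S * X * A]) (w0 pi e)%:E *
     (if e.1.2 \in Y then Mass pi n e.1.1 e.2 else Vis pi n e.1.1 e.2 Y))%E.
Proof.
rewrite /prob_visit esum_mkcond esum_tuple; last first.
  by move=> t; case: ifP => _ //; rewrite lee_fin; case: (tval t) => [|[[s x] a] tr] /=;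
    [exact: ler01|rewrite !mulr_ge0 ?mu_ge0 ?q_ge0 ?pi_ge0 ?tw_ge0].
congr fine; apply: eq_esum => e _.
have hmem (t : n.-tuple (S * X * A)) : ([tuple of e :: t] \in [set tr : n.+1.-tuple (S * X * A) | exists2 p, p \in tval tr & Y p.1.2])
    = (e :: tval t \in vis Y).
  by apply/idP/idP => /set_mem h; apply: mem_set.
have htw (t : n.-tuple (S * X * A)) : traj_weight mu T q pi (tval [tuple of e :: t]) = w0 pi e * traj_weight_from T q pi e.1.1 e.2 t.
  by case: e {hmem} => -[].
case: ifP => hy.
  under eq_esum => t _ do rewrite hmem vis_cons hy orTb htw EFinM.
  by rewrite esumZl ?w0_ge0 // => t; rewrite lee_fin tw_ge0.
under eq_esum => t _ do rewrite hmem vis_cons hy orFb htw EFinM.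
rewrite /Vis -esumZl ?w0_ge0 //; last by move=> t; case: ifP; rewrite lee_fin ?tw_ge0.
by apply: eq_esum => t _; case: ifP => _; rewrite ?mule0.
Qed.


Section CaseN.
Variables (Xp : set X) (x0 : X) (c : X -> R).
Hypothesis c_ge0 : forall x, 0 <= c x.
Hypothesis hc : forall x, Xp x -> forall s a,
  T s a (g x) * q (g x) x = c x * (T s a (g x0) * q (g x0) x0).
Hypothesis hlay : forall x, Xp x -> (0 < val (layS (g x)))%N.

Definition beta s a := T s a (g x0) * q (g x0) x0.

Lemma beta_ge0 s a : 0 <= beta s a.
Proof. by rewrite /beta mulr_ge0 ?T_ge0 ?q_ge0. Qed.

Fixpoint K pi n s a : \bar R :=
  if n is n'.+1 then
    ((beta s a)%:E + \esum_(e in [set: S * X * A]) (w1 pi s a e)%:E * K pi n' e.1.1 e.2)%E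
  else 0%E.

Lemma KS pi n s a : K pi n.+1 s a =
  ((beta s a)%:E + \esum_(e in [set: S * X * A]) (w1 pi s a e)%:E * K pi n e.1.1 e.2)%E.
Proof. by []. Qed.

Lemma K_ge0 pi (hpi : is_policy pi) n s a : (0 <= K pi n s a)%E.
Proof.
elim: n s a => [|n IH] s a //=.
rewrite adde_ge0 ?lee_fin ?beta_ge0 //; apply: esum_ge0 => e _.
by rewrite mule_ge0 ?lee_fin ?w1_ge0.
Qed.

Lemma K_late pi n s a : (val (layS (g x0)) <= val (layS s))%N -> K pi n s a = 0%E.
Proof.
elim: n s a => [|n IH] s a hl //=.
have -> : beta s a = 0.
  apply/eqP; apply: contraT; rewrite /beta mulf_eq0 negb_or => /andP[hT _].
  by move: (T_lay (T_pos hT)) hl => ->; rewrite ltnn.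
rewrite add0e; apply: esum1 => e _.
case: (eqVneq (w1 pi s a e) 0) => [->|/w1_pos [_ _ _ hle]]; first by rewrite mul0e.
by rewrite IH ?mule0 // hle; lia.
Qed.

Lemma Vis_N pi (hpi : is_policy pi) (Y : set X) (hY : Y `<=` Xp) n s a :
  (val (layS s) + n < H)%N ->
  Vis pi n s a Y = ((\esum_(x in Y) (c x)%:E) * K pi n s a)%E.
Proof.
set cY := (\esum_(x in Y) (c x)%:E)%E.
have cY0 : (0 <= cY)%E by apply: esum_ge0 => x _; rewrite lee_fin.
elim: n s a => [|n IH] s a hl; first by rewrite Vis0 /= mule0.
rewrite VisS //.
transitivity (\esum_(e in [set: S * X * A])
   ((if e.1.2 \in Y then (w1 pi s a e)%:E else 0) + cY * ((w1 pi s a e)%:E * K pi n e.1.1 e.2)))%E.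
  apply: eq_esum => e _.
  case: (eqVneq (w1 pi s a e) 0) => [->|hw].
    by rewrite !mul0e mule0 adde0; case: ifP.
  have [hT hq hg hle] := w1_pos pi s a e hw.
  case: ifP => hy.
    rewrite Mass1 // ?hle; last by lia.
    rewrite mule1 (@K_late pi n) ?mule0 ?adde0 //.
    have hx : Xp e.1.2 := hY _ (set_mem hy).
    have := hc _ hx s a; rewrite hg => hcx.
    have hpos : 0 < T s a e.1.1 * q e.1.1 e.1.2 by rewrite mulr_gt0.
    have : beta s a != 0.
      by apply/eqP; rewrite /beta => hb; move: hpos; rewrite hcx hb mulr0 ltxx.
    rewrite /beta mulf_eq0 negb_or => /andP[/T_pos/T_lay -> _].
    by rewrite hle.
  rewrite IH ?hle; last by lia.
  by rewrite add0e muleCA.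
have h1 : (\esum_(e in [set: S * X * A]) (if e.1.2 \in Y then (w1 pi s a e)%:E else 0%R) = cY * (beta s a)%:E)%E.
rewrite split2; last by move=> e; case: ifP; rewrite ?lee_fin ?w1_ge0.
transitivity (\esum_(x in [set: X]) (if x \in Y then (c x * beta s a)%:E else 0))%E.
  apply: eq_esum => x _ /=; case: ifP => hy; last by rewrite big1 // => s' _; rewrite big1.
  under eq_bigr => s' _.
    rewrite sumEFin.
    under eq_bigr do rewrite /w1 /=.
    rewrite -mulr_sumr pi_sum // mulr1.
    over.
  rewrite sumEFin (bigD1 (g x)) //= big1 ?addr0; first by rewrite hc //; exact: (hY _ (set_mem hy)).
  move=> s' hs'; apply/eqP; rewrite mulf_eq0; apply/orP; right.
  apply: contraT => /q_pos/q_dec hgx; by rewrite hgx eqxx in hs'.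
rewrite -esum_mkcond.
under eq_esum do rewrite EFinM muleC.
rewrite esumZl; [exact: muleC|exact: beta_ge0|by move=> x; rewrite lee_fin].
rewrite esumD; last first.
- by move=> e _; rewrite mule_ge0 // mule_ge0 ?lee_fin ?w1_ge0 ?K_ge0.
- by move=> e _; case: ifP; rewrite ?lee_fin ?w1_ge0.
rewrite esumZe //; last by move=> e; rewrite mule_ge0 ?lee_fin ?w1_ge0 ?K_ge0.
apply: (@eq_trans _ _ (cY * (beta s a)%:E + cY * (\esum_(e in [set: S * X * A]) (w1 pi s a e)%:E * K pi n e.1.1 e.2))%E).
  by rewrite h1.
rewrite KS ge0_muleDr //; first by rewrite lee_fin beta_ge0.
by apply: esum_ge0 => e _; rewrite mule_ge0 ?lee_fin ?w1_ge0 ?K_ge0.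
Qed.

Definition LN pi n : \bar R :=
  (\esum_(e in [set: S * X * A]) (w0 pi e)%:E * K pi n e.1.1 e.2)%E.

Lemma LN_ge0 pi (hpi : is_policy pi) n : (0 <= LN pi n)%E.
Proof. by apply: esum_ge0 => e _; rewrite mule_ge0 ?lee_fin ?w0_ge0 ?K_ge0. Qed.

Lemma prob_N pi (hpi : is_policy pi) (Y : set X) (hY : Y `<=` Xp) n (hH : H = n.+1) :
  prob_visit n.+1 mu T q pi Y = fine ((\esum_(x in Y) (c x)%:E) * LN pi n)%E.
Proof.
rewrite prob_dec //; congr fine.
rewrite /LN -esumZe; last by move=> e; rewrite mule_ge0 ?lee_fin ?w0_ge0 ?K_ge0.
  2: by apply: esum_ge0 => x _; rewrite lee_fin.
apply: eq_esum => e _.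
case: (eqVneq (w0 pi e) 0) => [->|/w0_pos [hm hq hg hl]]; first by rewrite !mul0e mule0.
case: ifP => hy.
  by move: (hlay _ (hY _ (set_mem hy))); rewrite hg hl.
by rewrite Vis_N // ?hl ?hH // muleCA.
Qed.

End CaseN.

Section CaseZ.
Variables (Xp : set X).
Hypothesis hz : forall x, Xp x -> forall s a, T s a (g x) * q (g x) x = 0.

Lemma Vis_Z pi (hpi : is_policy pi) (Y : set X) (hY : Y `<=` Xp) n s a :
  Vis pi n s a Y = 0%E.
Proof.
elim: n s a => [|n IH] s a; first exact: Vis0.
rewrite VisS //; apply: esum1 => e _.
case: ifP => hy; last by rewrite IH mule0.
have -> : w1 pi s a e = 0; last by rewrite mul0e.
case: (eqVneq (w1 pi s a e) 0) => // /w1_pos [hT hq hg _].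
have := hz _ (hY _ (set_mem hy)) s a; rewrite hg => /eqP.
by rewrite mulf_eq0 => /orP[/eqP h|/eqP h]; move: hT hq; rewrite h ltxx.
Qed.

Definition cZ (Y : set X) : \bar R :=
  (\sum_(s : S) \esum_(x in [set: X]) (if x \in Y then (mu s * q s x)%:E else 0))%E.

Lemma cZ_ge0 Y : (0 <= cZ Y)%E.
Proof.
apply: sume_ge0 => s _; apply: esum_ge0 => x _; case: ifP => _ //.
by rewrite lee_fin mulr_ge0 ?mu_ge0 ?q_ge0.
Qed.

Lemma prob_Z pi (hpi : is_policy pi) (Y : set X) (hY : Y `<=` Xp) n (hH : H = n.+1) :
  prob_visit n.+1 mu T q pi Y = fine (cZ Y * 1)%E.
Proof.
rewrite prob_dec // mule1; congr fine.
transitivity (\esum_(e in [set: S * X * A]) (if e.1.2 \in Y then (w0 pi e)%:E else 0))%E.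
  apply: eq_esum => e _.
  case: (eqVneq (w0 pi e) 0) => [->|/w0_pos [hm hq hg hl]]; first by rewrite mul0e; case: ifP.
  case: ifP => hy; last by rewrite (@Vis_Z pi hpi Y hY) mule0.
  by rewrite Mass1 ?mule1 // hl hH.
rewrite split1; last by move=> e; case: ifP; rewrite ?lee_fin ?w0_ge0.
apply: eq_bigr => s _; apply: eq_esum => x _ /=.
case: ifP => hy; last by rewrite big1.
rewrite sumEFin; congr EFin.
by rewrite /w0 /= -mulr_sumr pi_sum // mulr1.
Qed.

End CaseZ.


Lemma fs_exists (y0 : X * A) : exists u : X * A -> R, full_support u.
Proof.
pose b (n : nat) : R := 1 / (2 ^ n.+1)%:R.
have b_gt0 n : 0 < b n by rewrite /b divr_gt0 // ltr0n expn_gt0.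
pose v (xa : X * A) := b (pickle xa).
have v0 xa : (0 <= (v xa)%:E)%E by rewrite lee_fin; apply/ltW/b_gt0.
have hle : (\esum_(xa in [set: X * A]) (v xa)%:E <= 1)%E.
  rewrite /v -(esum_image [set: X * A] pickle (fun n => (b n)%:E)); last first.
    by move=> x y _ _; apply: (pcan_inj pickleK).
  rewrite esum_mkcond.
  apply: (@le_trans _ _ (\esum_(n in [set: nat]) (b n)%:E)%E).
    by apply: le_esum => n _; case: ifP => _ //; rewrite lee_fin; apply/ltW/b_gt0.
  rewrite -nneseries_esumT; last by move=> n; rewrite lee_fin; apply/ltW/b_gt0.
  exact: (epsilon_trick0 xpredT ler01).
have hge : ((v y0)%:E <= \esum_(xa in [set: X * A]) (v xa)%:E)%E by apply: le_esum1.
set E := \esum_(xa in [set: X * A]) (v xa)%:E in hle hge.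
have Efin : E \is a fin_num by rewrite ge0_fin_numE ?(le_lt_trans hle) ?ltry // (le_trans (v0 y0)).
have hZ : 0 < fine E by rewrite fine_gt0 // (lt_le_trans _ hge) ?lte_fin ?b_gt0 //= (le_lt_trans hle) ?ltry.
exists (fun xa => (fine E)^-1 * v xa); split.
  by move=> xa; rewrite mulr_gt0 ?invr_gt0 ?b_gt0.
under eq_esum do rewrite EFinM.
rewrite esumZl; [|by rewrite invr_ge0 ltW|by []].
by rewrite -/E -(fineK Efin) -EFinM mulVf ?gt_eqF.
Qed.

Lemma obsT_ge0 x' x a : 0 <= obsT T q g x' x a.
Proof. by rewrite /obsT mulr_ge0 ?q_ge0 ?T_ge0. Qed.

Lemma obsT_le1 x' x a : obsT T q g x' x a <= 1.
Proof. by rewrite /obsT mulr_ile1 ?q_ge0 ?T_ge0 ?q_le1 ?T_le1. Qed.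

Lemma caseN (Xp : set X)
  (hinsep : forall x1 x2, Xp x1 -> Xp x2 -> backward_kin_insep T q g x1 x2)
  x0 (y0 : X * A) (hx0 : Xp x0) (hy0 : 0 < obsT T q g x0 y0.1 y0.2) :
  exists c : X -> R, (forall x, 0 <= c x) /\
    (forall x, Xp x -> forall s a,
       T s a (g x) * q (g x) x = c x * (T s a (g x0) * q (g x0) x0)) /\
    (forall x, Xp x -> (0 < val (layS (g x)))%N).
Proof.
have [u [u0 u1]] := fs_exists y0.
pose D x := fine (\esum_(y in [set: X * A]) (obsT T q g x y.1 y.2 * u y)%:E).
have D_ge0 x : 0 <= D x.
  by apply: fine_ge0; apply: esum_ge0 => y _; rewrite lee_fin mulr_ge0 ?obsT_ge0 ?ltW.
have hD0 : 0 < D x0.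
  apply: fine_gt0; apply/andP; split.
    apply: (@lt_le_trans _ _ (obsT T q g x0 y0.1 y0.2 * u y0)%:E).
      by rewrite lte_fin mulr_gt0.
    by apply: le_esum1 => // y; rewrite lee_fin mulr_ge0 ?obsT_ge0 ?ltW.
  apply: (@le_lt_trans _ _ 1%E); last exact: ltry.
  rewrite -u1; apply: le_esum => y _; rewrite lee_fin ler_piMl ?obsT_le1 ?ltW //.
have Ey x : Xp x -> forall y,
    obsT T q g x y.1 y.2 * u y / D x = obsT T q g x0 y.1 y.2 * u y / D x0.
  move=> hx y; have := hinsep x x0 hx hx0 u (conj u0 u1).
  by move=> /(congr1 (fun f => f y)).
have r0 : 0 < obsT T q g x0 y0.1 y0.2 * u y0 / D x0 by rewrite divr_gt0 // mulr_gt0 // u0.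
have hDx x : Xp x -> D x != 0.
  move=> hx; apply/eqP => h; move: (Ey x hx y0); rewrite h invr0 mulr0 => h'.
  by move: r0; rewrite -h' ltxx.
have hox x : Xp x -> 0 < obsT T q g x y0.1 y0.2.
  move=> hx; rewrite lt0r obsT_ge0 andbT; apply/eqP => h.
  by move: r0; rewrite -(Ey x hx y0) h !mul0r ltxx.
exists (fun x => D x / D x0); split; first by move=> x; rewrite divr_ge0.
split; last first.
  move=> x hx; have := hox x hx; rewrite /obsT => /gt_eqF/negbT.
  rewrite mulf_eq0 negb_or => /andP[_ /T_pos/T_lay ->] //.
move=> x hx s a.
have [xs hxs] := emits s; have hg := q_dec hxs.
have := Ey x hx (xs, a); rewrite /obsT /= hg => h.
have hu : u (xs, a) != 0 by rewrite gt_eqF.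
have hD0' : D x0 != 0 by rewrite gt_eqF.
have hDx' := hDx x hx.
have -> : T s a (g x) * q (g x) x = (q (g x) x * T s a (g x) * u (xs, a) / D x) * D x / u (xs, a).
  by field; rewrite hu hDx'.
by rewrite h; field; rewrite hu hD0'.
Qed.


Lemma key (Xp : set X)
  (hinsep : forall x1 x2, Xp x1 -> Xp x2 -> backward_kin_insep T q g x1 x2)
  n (hH : H = n.+1) :
  exists L : (X -> A -> R) -> \bar R,
    (forall pi, is_policy pi -> (0 <= L pi)%E) /\
    forall Y, Y `<=` Xp -> exists cY : \bar R, (0 <= cY)%E /\
      forall pi, is_policy pi -> prob_visit n.+1 mu T q pi Y = fine (cY * L pi)%E.
Proof.
case: (pselect (exists x0, Xp x0 /\ exists y, 0 < obsT T q g x0 y.1 y.2)).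
  move=> [x0 [hx0 [y0 hy0]]].
  have [c [c0 [hc hlay]]] := @caseN Xp hinsep x0 y0 hx0 hy0.
  exists (fun pi => LN x0 pi n); split; first by move=> pi hpi; exact: (@LN_ge0 x0 pi hpi n).
  move=> Y hY; exists (\esum_(x in Y) (c x)%:E)%E; split.
    by apply: esum_ge0 => x _; rewrite lee_fin.
  by move=> pi hpi; exact: (@prob_N Xp x0 c c0 hc hlay pi hpi Y hY n hH).
move=> hn.
have hz : forall x, Xp x -> forall s a, T s a (g x) * q (g x) x = 0.
  move=> x hx s a; apply/eqP; apply: contraT => hne.
  have [xs hxs] := emits s; have hg := q_dec hxs.
  apply: False_ind; apply: hn; exists x; split => //; exists (xs, a).
  rewrite /obsT /= hg mulrC lt0r hne /=.
  by rewrite mulr_ge0 ?T_ge0 ?q_ge0.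
exists (fun _ => 1%E); split => // Y hY; exists (cZ Y); split; first exact: cZ_ge0.
by move=> pi hpi; exact: (@prob_Z Xp hz pi hpi Y hY n hH).
Qed.

End MDP.

Lemma ratio_aux (R : realType) (c L1 L2 : \bar R) :
  (0 <= c)%E -> (0 <= L1)%E -> (0 <= L2)%E -> fine (c * L2)%E != 0 ->
  fine (c * L1)%E / fine (c * L2)%E = fine L1 / fine L2.
Proof.
move=> c0 L10 L20; move: c L1 L2 c0 L10 L20 => [c| |] [l1| |] [l2| |] //= c0 l10 l20;
  rewrite ?lee_fin in c0 l10 l20.
all: first [
  by rewrite eqxx |
  (rewrite mulf_eq0 negb_or => /andP[hc hl2]; field; by rewrite hc hl2) |
  (rewrite mulf_eq0 negb_or => /andP[hc _]; by rewrite gt0_muley /= ?mul0r // lte_fin lt0r hc c0) |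
  (have [->|cpos] := eqVneq c 0; [by rewrite mul0e eqxx|by rewrite gt0_muley ?lte_fin ?lt0r ?cpos ?c0 // eqxx]) |
  (have [->|lpos] := eqVneq l2 0; [by rewrite mule0 eqxx|by rewrite gt0_mulye ?lte_fin ?lt0r ?lpos ?l20 // eqxx]) ].
Qed.

Theorem mainTheorem6 (R : realType) (H : nat) (S : finType) (X : countType)
  (A : finType) (layS : S -> 'I_H) (layX : X -> 'I_H)
  (mu : S -> R) (T : S -> A -> S -> R) (q : S -> X -> R) (g : X -> S)
  (hMDP : is_block_mdp layS layX mu T q g)
  (Xp Xp1 Xp2 : set X)
  (hinsep : forall x1 x2, Xp x1 -> Xp x2 -> backward_kin_insep T q g x1 x2)
  (hsub1 : Xp1 `<=` Xp) (hsub2 : Xp2 `<=` Xp)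
  (pi1 pi2 : X -> A -> R) (hpi1 : is_policy pi1) (hpi2 : is_policy pi2)
  (hden1 : prob_visit H mu T q pi2 Xp1 != 0)
  (hden2 : prob_visit H mu T q pi2 Xp2 != 0) :
  prob_visit H mu T q pi1 Xp1 / prob_visit H mu T q pi2 Xp1 =
  prob_visit H mu T q pi1 Xp2 / prob_visit H mu T q pi2 Xp2.
Proof.
case: H layS layX hMDP hden1 hden2 => [|n] layS layX hMDP hden1 hden2.
  exfalso; move: hden1; rewrite /prob_visit esum1 ?eqxx //.
  by move=> t [p]; rewrite (tuple0 t).
have [L [L0 hL]] := @key R n.+1 S X A layS layX mu T q g hMDP Xp hinsep n erefl.
have [c1 [c10 h1]] := hL _ hsub1.
have [c2 [c20 h2]] := hL _ hsub2.
move: hden1 hden2; rewrite !h1 // !h2 // => hd1 hd2.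
by rewrite !ratio_aux ?L0.
Qed.
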